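(* Let $D:A\to\mathbf{qPOS}$ be a small diagram with $D(\alpha)=(\mathcal X_\alpha,R_\alpha)$. Let $\mathcal X$ with maps $J_\alpha:\mathcal X\to\mathcal X_\alpha$ be a limit in $\mathbf{qSet}$ of the underlying diagram of quantum sets. Then $R=\bigwedge_{\alpha\in A}J_\alpha^\dagger\circ R_\alpha\circ J_\alpha$ is a partial order on $\mathcal X$ (i.e. $(\mathcal X,R)$ is a quantum poset), and $(\mathcal X,R)$ together with the maps $J_\alpha$ is a limit of $D$ in $\mathbf{qPOS}$.
   Context: A quantum set $\mathcal X$ is a set $\mathrm{At}(\mathcal X)$ of nonzero finite-dimensional Hilbert spaces (atoms). A relation $R$ from $\mathcal X$ to $\mathcal Y$ is a choice of subspaces $R(X,Y)\subseteq L(X,Y)$ for all atoms. Composition: $(S\circ R)(X,Z)=\mathrm{span}\{sr: r\in R(X,Y), s\in S(Y,Z), Y\in\mathrm{At}(\mathcal Y)\}$; identity $I_{\mathcal X}(X,X)=\mathbb C 1_X$ and $0$ off the diagonal; adjoint $R^\dagger(Y,X)=\{r^\dagger: r\in R(X,Y)\}$; $R\le S$ entrywise inclusion; $\bigwedge$ entrywise intersection. A function $F:\mathcal X\to\mathcal Y$ is a relation with $F\circ F^\dagger\le I_{\mathcal Y}$ and $F^\dagger\circ F\ge I_{\mathcal X}$; quantum sets and functions form $\mathbf{qSet}$ (which is complete). A quantum poset is $(\mathcal X,R)$ with $I_{\mathcal X}\le R$, $R\circ R\le R$, $R\wedge R^\dagger\le I_{\mathcal X}$; a monotone map $F:(\mathcal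 X,R)\to(\mathcal Y,S)$ is a function with $F\circ R\le S\circ F$; these form $\mathbf{qPOS}$. *)

(* Defs.v *)
From HB Require Import structures.
From mathcomp Require Import all_boot all_algebra.
From mathcomp Require Import complex.
From mathcomp Require Import reals.

Set Implicit Arguments.
Unset Strict Implicit.
Unset Printing Implicit Defensive.

Import GRing.Theory.
Local Open Scope ring_scope.

(* A quantum set: a set of atoms, each atom being the nonzero finite-dimensional
   Hilbert space C^(dim x). *)
Record qset := QSet {
  atom : Type;
  dim : atom -> nat;
  dim_gt0 : forall x, (0 < dim x)%N
}.

Section QuantumSets.
Variable R : realType.
Local Notation C := (R[i]).

(* L(X, Y) for atoms x, y is 'M[C]_(dim y, dim x). *)
Definition qrel (X Y : qset) :=
  forall (x : atom X) (y : atom Y), 'M[C]_(dim y, dim x) -> Prop.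

Definition is_subspace (m n : nat) (S : 'M[C]_(m, n) -> Prop) :=
  S 0 /\ forall (a : C) u v, S u -> S v -> S (a *: u + v).

Definition is_qrel (X Y : qset) (Rl : qrel X Y) :=
  forall x y, is_subspace (Rl x y).

(* composition: (S o R)(x,z) = span { s r : r in R(x,y), s in S(y,z), y atom } *)
Definition qcomp (X Y Z : qset) (S : qrel Y Z) (Rl : qrel X Y) : qrel X Z :=
  fun x z M =>
    exists s : seq {y : atom Y & (C * 'M[C]_(dim y, dim x) * 'M[C]_(dim z, dim y))%type},
      foldr (fun t P => (Rl x (projT1 t) (projT2 t).1.2 /\
                         S (projT1 t) z (projT2 t).2) /\ P) True s /\
      M = \sum_(t <- s) ((projT2 t).1.1 *: ((projT2 t).2 *m (projT2 t).1.2)).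

Definition qid (X : qset) : qrel X X :=
  fun x x' M => M = 0 \/
    exists (e : x = x') (c : C), M = castmx (congr1 (@dim X) e, erefl) (c%:M).

Definition adjmx (m n : nat) (M : 'M[C]_(m, n)) : 'M[C]_(n, m) :=
  (map_mx conjc M)^T.

Definition qdag (X Y : qset) (Rl : qrel X Y) : qrel Y X :=
  fun y x M => exists N, Rl x y N /\ M = adjmx N.

Definition qle (X Y : qset) (Rl S : qrel X Y) :=
  forall x y M, Rl x y M -> S x y M.

Definition qmeet2 (X Y : qset) (Rl S : qrel X Y) : qrel X Y :=
  fun x y M => Rl x y M /\ S x y M.

Definition qbigmeet (I : Type) (X Y : qset) (F : I -> qrel X Y) : qrel X Y :=
  fun x y M => forall i, F i x y M.

Definition is_qfun (X Y : qset) (F : qrel X Y) :=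
  is_qrel F /\ qle (qcomp F (qdag F)) (@qid Y) /\ qle (@qid X) (qcomp (qdag F) F).

Definition is_qposet (X : qset) (Rl : qrel X X) :=
  is_qrel Rl /\ qle (@qid X) Rl /\ qle (qcomp Rl Rl) Rl /\
  qle (qmeet2 Rl (qdag Rl)) (@qid X).

Definition is_monotone (X Y : qset) (Rl : qrel X X) (S : qrel Y Y) (F : qrel X Y) :=
  is_qfun F /\ qle (qcomp F Rl) (qcomp S F).

End QuantumSets.

Unset Implicit Arguments.

Record smallcat := SmallCat {
  obj : Type;
  hom : obj -> obj -> Type;
  cid : forall a, hom a a;
  ccomp : forall a b c, hom b c -> hom a b -> hom a c;
  ccompA : forall a b c d (h : hom c d) (g : hom b c) (f : hom a b),
      ccomp a c d h (ccomp a b c g f) = ccomp a b d (ccomp b c d h g) f;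
  ccomp1l : forall a b (f : hom a b), ccomp a b b (cid b) f = f;
  ccomp1r : forall a b (f : hom a b), ccomp a a b f (cid a) = f
}.

Arguments hom {s} a b.
Arguments cid {s} a.
Arguments ccomp {s a b c} g f.

Record qpos_diagram (R : realType) (A : smallcat) := QPosDiagram {
  dobj : obj A -> qset;
  drel : forall a, qrel R (dobj a) (dobj a);
  dmor : forall a b, hom a b -> qrel R (dobj a) (dobj b);
  drel_po : forall a : obj A, @is_qposet R (dobj a) (drel a);
  dmor_mono : forall (a b : obj A) (f : hom a b), @is_monotone R (dobj a) (dobj b) (drel a) (drel b) (dmor a b f);
  dmor_id : forall a : obj A, dmor a a (cid a) = @qid R (dobj a);
  dmor_comp : forall a b c (g : hom b c) (f : hom a b),
      dmor a c (ccomp g f) = @qcomp R (dobj a) (dobj b) (dobj c) (dmor b c g) (dmor a b f)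
}.

Arguments dobj {R A} q a.
Arguments drel {R A} q a.
Arguments dmor {R A} q {a b} f.

Set Implicit Arguments.

Section Limits.
Variables (R : realType) (A : smallcat) (D : qpos_diagram R A).

Definition is_qset_cone (W : qset) (K : forall a, qrel R W (dobj D a)) :=
  (forall a, is_qfun (K a)) /\
  (forall a b (f : hom a b), qcomp (dmor D f) (K a) = K b).

Definition is_qset_limit (X : qset) (J : forall a, qrel R X (dobj D a)) :=
  is_qset_cone J /\
  forall (W : qset) (K : forall a, qrel R W (dobj D a)), is_qset_cone K ->
    exists K0 : qrel R W X,
      [/\ is_qfun K0, (forall a, qcomp (J a) K0 = K a) &
          forall K1 : qrel R W X, is_qfun K1 ->
            (forall a, qcomp (J a) K1 = K a) -> K1 = K0].

Definition is_qpos_cone (W : qset) (T : qrel R W W)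
    (K : forall a, qrel R W (dobj D a)) :=
  (forall a, is_monotone T (drel D a) (K a)) /\
  (forall a b (f : hom a b), qcomp (dmor D f) (K a) = K b).

Definition is_qpos_limit (X : qset) (Rl : qrel R X X)
    (J : forall a, qrel R X (dobj D a)) :=
  is_qposet Rl /\ is_qpos_cone Rl J /\
  forall (W : qset) (T : qrel R W W) (K : forall a, qrel R W (dobj D a)),
    is_qposet T -> is_qpos_cone T K ->
    exists K0 : qrel R W X,
      [/\ is_monotone T Rl K0, (forall a, qcomp (J a) K0 = K a) &
          forall K1 : qrel R W X, is_monotone T Rl K1 ->
            (forall a, qcomp (J a) K1 = K a) -> K1 = K0].

End Limits.

(* Main.v *)
Require Import Defs.
From mathcomp Require Import all_boot all_algebra.
From mathcomp Require Import complex reals.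
From Stdlib Require Import ProofIrrelevance FunctionalExtensionality PropExtensionality ClassicalEpsilon.

Set Implicit Arguments.
Unset Strict Implicit.
Unset Printing Implicit Defensive.
Import GRing.Theory Num.Theory.
Local Open Scope ring_scope.
Local Notation dim := Defs.dim.

Section Rel.
Variable R : realType.
Local Notation C := (R[i]).

Definition spc (m n : nat) (P : 'M[C]_(m, n) -> Prop) :=
  P 0 /\ forall (a : C) u v, P u -> P v -> P (a *: u + v).

Lemma spcZ m n (P : 'M[C]_(m, n) -> Prop) a u : spc P -> P u -> P (a *: u).
Proof. by case=> P0 PD Pu; rewrite -[a *: u]addr0; apply: PD. Qed.
Lemma spcD m n (P : 'M[C]_(m, n) -> Prop) u v : spc P -> P u -> P v -> P (u + v).
Proof. by case=> P0 PD Pu Pv; rewrite -[u]scale1r; apply: PD. Qed.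
Lemma spcN m n (P : 'M[C]_(m, n) -> Prop) u : spc P -> P u -> P (- u).
Proof. by move=> sP Pu; rewrite -scaleN1r; apply: spcZ. Qed.
Lemma spcB m n (P : 'M[C]_(m, n) -> Prop) u v : spc P -> P u -> P v -> P (u - v).
Proof. by move=> sP Pu Pv; apply: spcD => //; apply: spcN. Qed.

Lemma spc_sub m n (P : 'M[C]_(m, n) -> Prop) : spc P <-> is_subspace P.
Proof. by []. Qed.

Definition ttype (X Y Z : qset) (x : atom X) (z : atom Z) :=
  {y : atom Y & (C * 'M[C]_(dim y, dim x) * 'M[C]_(dim z, dim y))%type}.

Definition tgood (X Y Z : qset) (S : qrel R Y Z) (Rl : qrel R X Y) x z
  (t : ttype Y x z) := Rl x (projT1 t) (projT2 t).1.2 /\ S (projT1 t) z (projT2 t).2.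

Lemma foldr_good (T : Type) (Q : T -> Prop) (s : seq T) :
  foldr (fun t P => Q t /\ P) True s <-> List.Forall Q s.
Proof.
elim: s => [|t s IH] /=; first by split=> // _; constructor.
split; first by case=> Qt /IH; constructor.
by move=> H; inversion H; split => //; apply/IH.
Qed.

Lemma qcompP (X Y Z : qset) (S : qrel R Y Z) (Rl : qrel R X Y) x z M :
  qcomp S Rl (x:=x) (y:=z) M <->
  exists s : seq (ttype Y x z), List.Forall (tgood S Rl (z:=z)) s /\
      M = \sum_(t <- s) ((projT2 t).1.1 *: ((projT2 t).2 *m (projT2 t).1.2)).
Proof.
split; case=> s [H1 H2]; exists s; split => //.
  by move/foldr_good: H1.
by apply/(foldr_good (tgood S Rl (z:=z))).
Qed.

Lemma qcomp_gen (X Y Z : qset) (S : qrel R Y Z) (Rl : qrel R X Y) x y z r s :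
  Rl x y r -> S y z s -> qcomp S Rl (s *m r).
Proof.
move=> Hr Hs; apply/qcompP.
exists [:: (existT _ y (1, r, s) : ttype Y x z)]; split.
  by constructor => //; constructor.
by rewrite big_seq1 /= scale1r.
Qed.

Lemma qcomp_spc (X Y Z : qset) (S : qrel R Y Z) (Rl : qrel R X Y) x z :
  spc (@qcomp R X Y Z S Rl x z).
Proof.
split.
  by apply/qcompP; exists [::]; split; [constructor | rewrite big_nil].
move=> a u v /qcompP [s1 [G1 ->]] /qcompP [s2 [G2 ->]]; apply/qcompP.
pose f := fun t : ttype Y x z =>
  (existT _ (projT1 t) (a * (projT2 t).1.1, (projT2 t).1.2, (projT2 t).2) : ttype Y x z).
exists (map f s1 ++ s2); split.
  apply/List.Forall_app; split => //.
  apply/List.Forall_map; apply: List.Forall_impl G1.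
  by case=> y [[c r] s'].
rewrite big_cat big_map /= scaler_sumr; congr (_ + _).
by apply: eq_bigr => -[y [[c r] s']] _ /=; rewrite scalerA.
Qed.

Lemma qcomp_ind (X Y Z : qset) (S : qrel R Y Z) (Rl : qrel R X Y) x z
    (P : 'M[C]_(dim z, dim x) -> Prop) :
  spc P ->
  (forall y r s, Rl x y r -> S y z s -> P (s *m r)) ->
  forall M, qcomp S Rl (x:=x) (y:=z) M -> P M.
Proof.
move=> [P0 PD] Pg M /qcompP [s [G ->]].
elim: s G => [|t s IH] G; first by rewrite big_nil.
have [Gt Gs] : tgood S Rl t /\ List.Forall (tgood S Rl (z:=z)) s by inversion G.
rewrite big_cons; apply: PD; last exact: IH.
by case: Gt => H1 H2; apply: Pg.
Qed.

Lemma qle_refl (X Y : qset) (Rl : qrel R X Y) : qle Rl Rl.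
Proof. by []. Qed.
Lemma qle_trans (X Y : qset) (A B E : qrel R X Y) : qle A B -> qle B E -> qle A E.
Proof. by move=> h1 h2 x y M /h1 /h2. Qed.

Lemma qrel_ext (X Y : qset) (A B : qrel R X Y) : qle A B -> qle B A -> A = B.
Proof.
move=> h1 h2; apply: functional_extensionality_dep => x.
apply: functional_extensionality_dep => y.
apply: functional_extensionality => M.
by apply: propositional_extensionality; split; [apply: h1 | apply: h2].
Qed.

Lemma qcomp_mono (X Y Z : qset) (S S' : qrel R Y Z) (Rl Rl' : qrel R X Y) :
  qle S S' -> qle Rl Rl' -> qle (qcomp S Rl) (qcomp S' Rl').
Proof.
move=> hS hR x z; apply: qcomp_ind; first exact: qcomp_spc.
by move=> y r s Hr Hs; apply: qcomp_gen; [apply: hR | apply: hS].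
Qed.

Lemma spc_mull m n p (P : 'M[C]_(m, p) -> Prop) (a : 'M[C]_(m, n)) :
  spc P -> spc (fun u : 'M[C]_(n, p) => P (a *m u)).
Proof.
move=> sP; split; first by rewrite mulmx0; case: sP.
by move=> c u v Pu Pv; rewrite mulmxDr -scalemxAr; apply: sP.2.
Qed.

Lemma spc_mulr m n p (P : 'M[C]_(m, p) -> Prop) (b : 'M[C]_(n, p)) :
  spc P -> spc (fun u : 'M[C]_(m, n) => P (u *m b)).
Proof.
move=> sP; split; first by rewrite mul0mx; case: sP.
by move=> c u v Pu Pv; rewrite mulmxDl -scalemxAl; apply: sP.2.
Qed.

Lemma qcompA (W X Y Z : qset) (A : qrel R Y Z) (B : qrel R X Y) (E : qrel R W X) :
  qcomp A (qcomp B E) = qcomp (qcomp A B) E.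
Proof.
apply: qrel_ext => w z.
  apply: qcomp_ind; first exact: qcomp_spc.
  move=> y r s Hr Hs; move: r Hr; apply: qcomp_ind.
    exact: (spc_mull _ (qcomp_spc _ _ _ _)).
  move=> x r' s' Hr' Hs'; rewrite mulmxA; apply: qcomp_gen => //.
  exact: qcomp_gen.
apply: qcomp_ind; first exact: qcomp_spc.
move=> x r s Hr Hs; move: s Hs; apply: qcomp_ind.
  exact: (spc_mulr _ (qcomp_spc _ _ _ _)).
move=> y r' s' Hr' Hs'; rewrite -mulmxA; apply: qcomp_gen => //.
exact: qcomp_gen.
Qed.

Lemma qid1 (X : qset) (x : atom X) : @qid R _ x x 1%:M.
Proof. by right; exists erefl, 1; rewrite castmx_id. Qed.

Lemma qidc (X : qset) (x : atom X) (c : C) : @qid R _ x x c%:M.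
Proof. by right; exists erefl, c; rewrite castmx_id. Qed.

Lemma qid_spc (X : qset) (x y : atom X) : spc (@qid R X x y).
Proof.
split; first by left.
move=> a u v; case=> [->|[e [c ->]]]; case=> [->|[e' [c' ->]]]; clear u v.
- by left; rewrite scaler0 addr0.
- by right; exists e', c'; rewrite scaler0 add0r.
- by right; exists e, (a * c); rewrite addr0; case: y / e; rewrite !castmx_id scale_scalar_mx.
- right; exists e, (a * c + c'); rewrite (proof_irrelevance _ e' e); clear e'.
  by case: y / e; rewrite !castmx_id scale_scalar_mx raddfD.
Qed.

Lemma qcomp_id_r (X Y : qset) (Rl : qrel R X Y) : is_qrel Rl -> qcomp Rl (@qid R X) = Rl.
Proof.
move=> HR; apply: qrel_ext => x z.
  apply: qcomp_ind; first exact: HR.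
  move=> y r s Hr Hs; case: Hr => [->|[e [c ->]]]; first by rewrite mulmx0; case: (HR x z).
  clear r; case: y / e s Hs => s Hs; rewrite castmx_id mul_mx_scalar.
  by apply: spcZ => //; apply: HR.
by move=> M HM; rewrite -[M]mulmx1; apply: qcomp_gen => //; apply: qid1.
Qed.

Lemma qcomp_id_l (X Y : qset) (Rl : qrel R X Y) : is_qrel Rl -> qcomp (@qid R Y) Rl = Rl.
Proof.
move=> HR; apply: qrel_ext => x z.
  apply: qcomp_ind; first exact: HR.
  move=> y r s Hr Hs; case: Hs => [->|[e [c ->]]]; first by rewrite mul0mx; case: (HR x z).
  clear s; case: z / e; rewrite castmx_id mul_scalar_mx.
  by apply: spcZ => //; apply: HR.
by move=> M HM; rewrite -[M]mul1mx; apply: qcomp_gen => //; apply: qid1.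
Qed.

Lemma adjmxK m n (M : 'M[C]_(m, n)) : adjmx (adjmx M) = M.
Proof. by apply/matrixP => i j; rewrite !mxE conjcK. Qed.

Lemma adjmx_mul m n p (A : 'M[C]_(m, n)) (B : 'M[C]_(n, p)) :
  adjmx (A *m B) = adjmx B *m adjmx A.
Proof. by rewrite /adjmx map_mxM trmx_mul. Qed.

Lemma adjmx_lin m n (a : C) (u v : 'M[C]_(m, n)) :
  adjmx (a *: u + v) = conjc a *: adjmx u + adjmx v.
Proof. by apply/matrixP => i j; rewrite !mxE rmorphD rmorphM. Qed.

Lemma adjmx0 m n : adjmx (0 : 'M[C]_(m, n)) = 0.
Proof. by apply/matrixP => i j; rewrite !mxE rmorph0. Qed.

Lemma adjmx_scalar n (c : C) : adjmx (c%:M : 'M[C]_n) = (conjc c)%:M.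
Proof.
by apply/matrixP => i j; rewrite !mxE rmorphMn eq_sym.
Qed.

Lemma adjmx_inj m n : injective (@adjmx R m n).
Proof. by move=> u v /(congr1 (@adjmx _ _ _)); rewrite !adjmxK. Qed.

Lemma qdag_spc (X Y : qset) (Rl : qrel R X Y) x y :
  spc (Rl x y) -> spc (qdag Rl (x:=y) (y:=x)).
Proof.
move=> [P0 PD]; split; first by exists 0; rewrite adjmx0.
move=> a _ _ [u [Hu ->]] [v [Hv ->]]; exists (conjc a *: u + v); split.
  exact: PD.
by rewrite adjmx_lin conjcK.
Qed.

Lemma qdag_qrel (X Y : qset) (Rl : qrel R X Y) : is_qrel Rl -> is_qrel (qdag Rl).
Proof. by move=> H y x; apply: qdag_spc; apply: H. Qed.

Lemma qdagK (X Y : qset) (Rl : qrel R X Y) : qdag (qdag Rl) = Rl.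
Proof.
apply: qrel_ext => x y M.
  by case=> N [[P [HP ->]] ->]; rewrite adjmxK.
by move=> HM; exists (adjmx M); split; [exists M | rewrite adjmxK].
Qed.

Lemma qdag_mono (X Y : qset) (A B : qrel R X Y) : qle A B -> qle (qdag A) (qdag B).
Proof. by move=> h y x M [N [HN ->]]; exists N; split => //; apply: h. Qed.

Lemma qdag_comp (X Y Z : qset) (S : qrel R Y Z) (Rl : qrel R X Y) :
  qdag (qcomp S Rl) = qcomp (qdag Rl) (qdag S).
Proof.
apply: qrel_ext => z x.
  move=> M [N [HN ->]]; move: N HN; apply: qcomp_ind.
    split; first by rewrite adjmx0; case: (qcomp_spc (qdag Rl) (qdag S) z x).
    move=> a u v Hu Hv; rewrite adjmx_lin; exact: (qcomp_spc _ _ _ _).2.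
  move=> y r s Hr Hs; rewrite adjmx_mul; apply: qcomp_gen.
    by exists s.
  by exists r.
apply: qcomp_ind; first by apply: qdag_spc; apply: qcomp_spc.
move=> y _ _ [s [Hs ->]] [r [Hr ->]]; exists (s *m r); split.
  exact: qcomp_gen.
by rewrite adjmx_mul.
Qed.

Lemma qdag_id (X : qset) : qdag (@qid R X) = @qid R X.
Proof.
apply: qrel_ext => x y.
  move=> _ [N [HN ->]]; case: HN => [->|[e [c ->]]]; first by left; rewrite adjmx0.
  clear N; right; case: x / e; exists erefl, (conjc c).
  by rewrite !castmx_id adjmx_scalar.
move=> M HM; exists (adjmx M); split; last by rewrite adjmxK.
case: HM => [->|[e [c ->]]]; first by left; rewrite adjmx0.
clear M; right; case: y / e; exists erefl, (conjc c).
by rewrite !castmx_id adjmx_scalar.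
Qed.

Lemma qcomp_qrel (X Y Z : qset) (S : qrel R Y Z) (Rl : qrel R X Y) :
  is_qrel (qcomp S Rl).
Proof. by move=> x z; apply: qcomp_spc. Qed.

Lemma qid_qrel (X : qset) : is_qrel (@qid R X).
Proof. by move=> x y; apply: qid_spc. Qed.

End Rel.

Section Main.
Variables (R : realType) (A : smallcat) (D : qpos_diagram R A).

Lemma qle_meet2 (X Y : qset) (Z P Q : qrel R X Y) :
  qle Z P -> qle Z Q -> qle Z (qmeet2 P Q).
Proof. by move=> h1 h2 x y M HM; split; [apply: h1 | apply: h2]. Qed.

Lemma qle_bigmeet (I : Type) (X Y : qset) (Z : qrel R X Y) (F : I -> qrel R X Y) :
  (forall i, qle Z (F i)) -> qle Z (qbigmeet F).
Proof. by move=> h x y M HM i; apply: h. Qed.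

Lemma qbigmeet_le (I : Type) (X Y : qset) (F : I -> qrel R X Y) i :
  qle (qbigmeet F) (F i).
Proof. by move=> x y M; apply. Qed.
Arguments qbigmeet_le {I X Y} F i.

Lemma qmeet2_qrel (X Y : qset) (P Q : qrel R X Y) :
  is_qrel P -> is_qrel Q -> is_qrel (qmeet2 P Q).
Proof.
move=> hP hQ x y; split; first by split; [case: (hP x y) | case: (hQ x y)].
by move=> a u v [Pu Qu] [Pv Qv]; split; [apply: (hP x y).2 | apply: (hQ x y).2].
Qed.

Lemma qbigmeet_qrel (I : Type) (X Y : qset) (F : I -> qrel R X Y) :
  (forall i, is_qrel (F i)) -> is_qrel (qbigmeet F).
Proof.
move=> hF x y; split; first by move=> i; case: (hF i x y).
by move=> a u v Hu Hv i; apply: (hF i x y).2.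
Qed.

Lemma fun_lid (X Y : qset) (F : qrel R X Y) : is_qfun F ->
  qle (@qid R X) (qcomp (qdag F) F).
Proof. by case=> _ []. Qed.

Lemma fun_rid (X Y : qset) (F : qrel R X Y) : is_qfun F ->
  qle (qcomp F (qdag F)) (@qid R Y).
Proof. by case=> _ []. Qed.

Lemma fun_qrel (X Y : qset) (F : qrel R X Y) : is_qfun F -> is_qrel F.
Proof. by case. Qed.


Lemma L1 (X Y Z : qset) (F : qrel R X Y) (G : qrel R Z X) :
  is_qfun F -> is_qrel G -> qle G (qcomp (qdag F) (qcomp F G)).
Proof.
move=> hF hG; rewrite qcompA -{1}(qcomp_id_l hG).
by apply: qcomp_mono => //; apply: fun_lid.
Qed.

Lemma L2 (X Y Z : qset) (F : qrel R X Y) (G : qrel R X Z) :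
  is_qfun F -> is_qrel G -> qle G (qcomp (qcomp G (qdag F)) F).
Proof.
move=> hF hG; rewrite -qcompA -{1}(qcomp_id_r hG).
by apply: qcomp_mono => //; apply: fun_lid.
Qed.

Lemma L3 (X Y W : qset) (F : qrel R X Y) (G : qrel R W Y) :
  is_qfun F -> is_qrel G -> qle (qcomp F (qcomp (qdag F) G)) G.
Proof.
move=> hF hG; rewrite qcompA -{2}(qcomp_id_l hG).
by apply: qcomp_mono => //; apply: fun_rid.
Qed.

Lemma L4 (X Y W : qset) (F : qrel R X Y) (G : qrel R Y W) :
  is_qfun F -> is_qrel G -> qle (qcomp (qcomp G F) (qdag F)) G.
Proof.
move=> hF hG; rewrite -qcompA -{2}(qcomp_id_r hG).
by apply: qcomp_mono => //; apply: fun_rid.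
Qed.

Lemma qcomp_monol (X Y Z : qset) (S S' : qrel R Y Z) (Rl : qrel R X Y) :
  qle S S' -> qle (qcomp S Rl) (qcomp S' Rl).
Proof. by move=> h; apply: qcomp_mono. Qed.

Lemma qcomp_monor (X Y Z : qset) (S : qrel R Y Z) (Rl Rl' : qrel R X Y) :
  qle Rl Rl' -> qle (qcomp S Rl) (qcomp S Rl').
Proof. by move=> h; apply: qcomp_mono. Qed.

Lemma poset_qrel (X : qset) (T : qrel R X X) : is_qposet T -> is_qrel T.
Proof. by case. Qed.
Lemma poset_refl (X : qset) (T : qrel R X X) : is_qposet T -> qle (@qid R X) T.
Proof. by case=> _ []. Qed.
Lemma poset_trans (X : qset) (T : qrel R X X) : is_qposet T -> qle (qcomp T T) T.
Proof. by case=> _ [_ []]. Qed.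
Lemma poset_anti (X : qset) (T : qrel R X X) : is_qposet T ->
  qle (qmeet2 T (qdag T)) (@qid R X).
Proof. by case=> _ [_ []]. Qed.

Section Lim.
Local Unset Implicit Arguments.
Variables (X : qset) (J : forall a : obj A, qrel R X (dobj D a)).
Hypothesis key : forall (x x' : atom X) (M : 'M[R[i]]_(dim x', dim x)),
  (forall a : obj A, @qcomp R X (dobj D a) X (qdag (J a)) (J a) x x' M) -> @qid R X x x' M.
Hypothesis Jfun : forall a, is_qfun (J a).

Let S a := qcomp (qdag (J a)) (qcomp (drel D a) (J a)).
Let Rl := qbigmeet S.

Lemma S_qrel a : is_qrel (S a).
Proof. exact: qcomp_qrel. Qed.

Lemma Rl_qrel : is_qrel Rl.
Proof. by apply: qbigmeet_qrel => a; apply: S_qrel. Qed.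

Lemma Rl_refl : qle (@qid R X) Rl.
Proof.
apply: qle_bigmeet => a; apply: qle_trans (fun_lid (Jfun a)) _.
apply: qcomp_monor; rewrite -{1}(qcomp_id_l (fun_qrel (Jfun a))).
by apply: qcomp_monol; apply: poset_refl; apply: drel_po.
Qed.

Lemma Rl_trans : qle (qcomp Rl Rl) Rl.
Proof.
apply: qle_bigmeet => a.
apply: qle_trans (qcomp_mono (qbigmeet_le S a) (qbigmeet_le S a)) _.
rewrite /S -!qcompA; apply: qcomp_monor.
apply: (qle_trans (B := qcomp (drel D a) (qcomp (drel D a) (J a)))).
  by apply: qcomp_monor; apply: L3 => //; apply: qcomp_qrel.
by rewrite qcompA; apply: qcomp_monol; apply: poset_trans; apply: drel_po.
Qed.

Lemma Sdag a : qdag (S a) = qcomp (qdag (J a)) (qcomp (qdag (drel D a)) (J a)).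
Proof. by rewrite /S !qdag_comp qdagK qcompA. Qed.

Lemma JSJ a (G : qrel R (dobj D a) (dobj D a)) : is_qrel G ->
  qle (qcomp (qcomp (J a) (qcomp (qdag (J a)) (qcomp G (J a)))) (qdag (J a))) G.
Proof.
move=> hG; apply: qle_trans _ (L4 (Jfun a) hG).
by apply: qcomp_monol; apply: L3 => //; apply: qcomp_qrel.
Qed.

Lemma Rl_anti : qle (qmeet2 Rl (qdag Rl)) (@qid R X).
Proof.
move=> x x' M HM; apply: key => a.
set T := qmeet2 (S a) (qdag (S a)).
have hT : is_qrel T by apply: qmeet2_qrel; [apply: S_qrel | apply: qdag_qrel; apply: S_qrel].
have HT : T x x' M.
  case: HM => H1 [N [H2 EM]]; split; first exact: (H1 a).
  by exists N; split => //; apply: (H2 a).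
have hJ := Jfun a.
suff HTle : qle T (qcomp (qdag (J a)) (J a)) by exact: HTle _ _ _ HT.
apply: qle_trans (L1 hJ hT) _; apply: qcomp_monor.
apply: (qle_trans (B := qcomp (qcomp (qcomp (J a) T) (qdag (J a))) (J a))).
  by apply: L2 => //; apply: qcomp_qrel.
apply: (qle_trans (B := qcomp (@qid R _) (J a))); last by rewrite qcomp_id_l //; apply: fun_qrel.
apply: qcomp_monol.
have hR := @drel_po _ _ D a.
apply: qle_trans _ (poset_anti hR); apply: qle_meet2.
  apply: qle_trans _ (JSJ a _ (poset_qrel hR)).
  by apply: qcomp_monol; apply: qcomp_monor => ?? ? [].
apply: qle_trans _ (JSJ a _ (qdag_qrel (poset_qrel hR))).
by apply: qcomp_monol; apply: qcomp_monor => ?? ? []; rewrite Sdag.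
Qed.


Lemma Rl_poset : is_qposet Rl.
Proof. by split; [exact: Rl_qrel | split; [exact: Rl_refl | split; [exact: Rl_trans | exact: Rl_anti]]]. Qed.

Lemma J_mono a : is_monotone Rl (drel D a) (J a).
Proof.
split; first exact: Jfun.
apply: (qle_trans (B := qcomp (J a) (S a))); first by apply: qcomp_monor; apply: qbigmeet_le.
by apply: L3 => //; apply: qcomp_qrel.
Qed.

Hypothesis Jlim : is_qset_limit J.

Lemma Rl_limit : is_qpos_limit Rl J.
Proof.
split; first exact: Rl_poset.
split; first by split; [exact: J_mono | case: Jlim => -[]].
move=> W T K hT hK.
have hKf : is_qset_cone K by split; [move=> a; case: (hK.1 a) | exact: hK.2].
case: (Jlim.2 W K hKf) => K0 [hK0 HJ Huniq].
exists K0; split => //; last first.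
  by move=> K1 [hK1 _] HJ1; apply: Huniq.
split => //.
apply: qle_trans (L2 hK0 (qcomp_qrel K0 T)) _.
apply: qcomp_monol; apply: qle_bigmeet => a.
apply: qle_trans (L1 (Jfun a) (qcomp_qrel _ _)) _.
apply: qcomp_monor.
rewrite !qcompA HJ.
apply: (qle_trans (B := qcomp (qcomp (drel D a) (K a)) (qdag K0))).
  by apply: qcomp_monol; exact: (hK.1 a).2.
rewrite -HJ -qcompA; apply: qcomp_monor; apply: L4 => //.
exact: fun_qrel.
Qed.

End Lim.

End Main.

Section Mx.
Variable R : realType.
Local Notation C := (R[i]).
Local Notation ii := ('i%C : C).

Lemma conji : conjc ii = - ii.
Proof. by apply/eqP; rewrite eq_complex /= oppr0 !eqxx. Qed.

Lemma ii2 : ii * ii = -1.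
Proof. by rewrite -expr2 sqr_i. Qed.

Lemma ii_neq0 : ii != 0.
Proof. by apply/eqP => h; have := ii2; rewrite h mul0r => /eqP; rewrite eq_sym oppr_eq0 oner_eq0. Qed.

Lemma two_neq0 : (2%:R : C) != 0.
Proof. by rewrite pnatr_eq0. Qed.

Lemma adjmxZ m n (a : C) (u : 'M[C]_(m, n)) : adjmx (a *: u) = conjc a *: adjmx u.
Proof. by rewrite -[a *: u]addr0 adjmx_lin adjmx0 addr0. Qed.

Lemma adjmxD m n (u v : 'M[C]_(m, n)) : adjmx (u + v) = adjmx u + adjmx v.
Proof. by rewrite -[u]scale1r adjmx_lin rmorph1 !scale1r. Qed.

Lemma adjmxN m n (u : 'M[C]_(m, n)) : adjmx (- u) = - adjmx u.
Proof. by rewrite -scaleN1r adjmxZ rmorphN rmorph1 scaleN1r. Qed.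

Lemma adjmx1 n : adjmx (1%:M : 'M[C]_n) = 1%:M.
Proof. by rewrite adjmx_scalar rmorph1. Qed.

Lemma mx_adj_eq0 m n (v : 'M[C]_(m, n)) : v *m adjmx v = 0 -> v = 0.
Proof.
move=> H; apply/matrixP => i j; rewrite mxE.
have := congr1 (fun M : 'M[C]_m => M i i) H; rewrite !mxE => /eqP.
rewrite psumr_eq0; last by move=> k _; rewrite !mxE; apply: mulcJ_ge0.
move/allP/(_ j (mem_index_enum _)); rewrite !mxE /= => /eqP.
by move/eqP; rewrite mulf_eq0 conjc_eq0 orbb => /eqP.
Qed.

Lemma herm_unit n (h : 'M[C]_n) : adjmx h = h -> (h + ii%:M) \in unitmx.
Proof.
move=> hh; rewrite unitmxE unitfE; apply/negP => /det0P [v vn0 Hv].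
have vh : v *m h = - (ii *: v).
  by apply/eqP; rewrite -subr_eq0 opprK -mul_mx_scalar -mulmxDr Hv.
set s := v *m adjmx v.
have hs : adjmx s = s by rewrite /s adjmx_mul adjmxK.
have hw : adjmx (v *m h *m adjmx v) = v *m h *m adjmx v.
  by rewrite !adjmx_mul adjmxK hh mulmxA.
rewrite vh mulNmx -scalemxAl adjmxN adjmxZ conji hs -/s in hw.
have : (ii + ii) *: s = 0.
  by move: hw; rewrite scaleNr opprK scalerDl => {1}->; rewrite addNr.
move/eqP; rewrite scaler_eq0 => /orP [|].
  rewrite -mulr2n -mulr_natr mulf_eq0 (negPf ii_neq0) /=.
  by rewrite (negPf two_neq0).
by move/eqP/mx_adj_eq0 => v0; rewrite v0 eqxx in vn0.
Qed.

Lemma inv_closed n (P : 'M[C]_n -> Prop) :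
  spc P -> P 1%:M -> (forall u v, P u -> P v -> P (u *m v)) ->
  forall h, P h -> h \in unitmx -> P (invmx h).
Proof.
case: n P => [|n] P sP P1 PM h Ph hu.
  by rewrite [invmx h]flatmx0; case: sP.
have Ppoly : forall p, P (horner_mx h p).
  elim/poly_ind => [|p c IH]; first by rewrite rmorph0; case: sP.
  rewrite rmorphD rmorphM /= horner_mx_X horner_mx_C.
  apply: spcD => //; first by rewrite -mulmxE; apply: PM.
  by rewrite -scalemx1; apply: spcZ.
have CH := Cayley_Hamilton h.
set p := char_poly h in CH.
have tk : take_poly 1 p = (p`_0)%:P.
  by apply/polyP => i; rewrite coef_take_poly coefC; case: i.
have := poly_take_drop 1 p; rewrite tk expr1 => Ep.
rewrite -Ep rmorphD rmorphM /= horner_mx_X horner_mx_C in CH.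
set q := horner_mx h (drop_poly 1 p) in CH.
have p0 : p`_0 != 0.
  by rewrite /p char_poly_det mulf_eq0 negb_or signr_eq0 /= -unitfE -unitmxE.
have : (p`_0)%:M *m invmx h + q *m h *m invmx h = 0.
  by rewrite -mulmxDl; move: CH; rewrite -mulmxE => ->; apply: mul0mx.
rewrite -mulmxA mulmxV // mulmx1 mul_scalar_mx => /eqP; rewrite addr_eq0 => /eqP E.
have -> : invmx h = (p`_0)^-1 *: (- q) by rewrite -E scalerA mulVf // scale1r.
apply: spcZ => //; apply: spcN => //; exact: Ppoly.
Qed.


Lemma scalar1_neq0 n : (0 < n)%N -> (1%:M : 'M[C]_n) != 0.
Proof.
move=> hn; apply/eqP => /matrixP /(_ (Ordinal hn) (Ordinal hn)).
by rewrite !mxE eqxx /= => /eqP; rewrite oner_eq0.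
Qed.

Lemma scalar_mx_eq0 n (c : C) : (0 < n)%N -> (c%:M : 'M[C]_n) = 0 -> c = 0.
Proof.
move=> hn /matrixP /(_ (Ordinal hn) (Ordinal hn)).
by rewrite !mxE eqxx /= mulr1n.
Qed.

Lemma adjmx_inv n (X : 'M[C]_n) : X \in unitmx ->
  adjmx X \in unitmx /\ adjmx (invmx X) = invmx (adjmx X).
Proof.
move=> Xu; have H : adjmx (invmx X) *m adjmx X = 1%:M.
  by rewrite -adjmx_mul mulmxV // adjmx1.
have [_ Yu] := mulmx1_unit H; split => //.
by rewrite -[LHS]mulmx1 -(mulmxV Yu) mulmxA H mul1mx.
Qed.

Lemma scalar_comm n (h : 'M[C]_n) a b :
  (h + a%:M) *m (h + b%:M) = (h + b%:M) *m (h + a%:M).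
Proof.
rewrite !mulmxDl !mulmxDr !mul_mx_scalar !mul_scalar_mx !scale_scalar_mx mulrC.
by rewrite -!addrA; congr (_ + _); rewrite !addrA [b *: h + _]addrC.
Qed.

Lemma comm_inv n (X Y : 'M[C]_n) : X \in unitmx -> X *m Y = Y *m X ->
  invmx X *m Y = Y *m invmx X.
Proof.
move=> Xu XY.
rewrite -[LHS]mulmx1 -(mulmxV Xu) !mulmxA -[invmx X *m Y *m X]mulmxA -XY.
by rewrite !mulmxA mulVmx // mul1mx.
Qed.

Lemma cayley n (h : 'M[C]_n) : adjmx h = h ->
  let u := (h - ii%:M) *m invmx (h + ii%:M) in
  u *m adjmx u = 1%:M /\ adjmx u *m u = 1%:M.
Proof.
move=> hh u; set X := h + ii%:M; set Y := h - ii%:M.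
have Xu : X \in unitmx by apply: herm_unit.
have aX : adjmx X = Y by rewrite /X adjmxD hh adjmx_scalar conji /Y raddfN.
have aY : adjmx Y = X by rewrite -aX adjmxK.
have [Yu aiX] := adjmx_inv Xu; rewrite aX in Yu aiX.
have XY : X *m Y = Y *m X.
  rewrite /X /Y; have -> : h - ii%:M = h + (- ii)%:M by rewrite raddfN.
  exact: scalar_comm.
have uu : u *m adjmx u = 1%:M.
  rewrite /u adjmx_mul aiX aY !mulmxA -[Y *m invmx X *m invmx Y *m X]mulmxA.
  rewrite (comm_inv Yu (esym XY)) !mulmxA -[Y *m invmx X *m X]mulmxA mulVmx //.
  by rewrite mulmx1 mulmxV.
by split => //; apply: mulmx1C.
Qed.

Lemma scalar_of n (P : 'M[C]_n -> Prop) : (0 < n)%N ->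
  spc P -> P 1%:M -> (forall u v, P u -> P v -> P (u *m v)) ->
  (forall u, P u -> P (adjmx u)) ->
  (forall u, P u -> u *m adjmx u = 1%:M -> adjmx u *m u = 1%:M -> exists c, u = c%:M) ->
  forall m, P m -> exists c, m = c%:M.
Proof.
move=> hn sP P1 PM PA Pu.
have PC : forall c, P c%:M by move=> c; rewrite -scalemx1; apply: spcZ.
have herm : forall h, P h -> adjmx h = h -> exists c, h = c%:M.
  move=> h Ph hh; have [uu uu'] := cayley hh.
  set X := h + ii%:M in uu uu'; set Y := h - ii%:M in uu uu'.
  have PX : P X by apply: spcD.
  have PY : P Y by apply: spcB.
  have Xu : X \in unitmx by apply: herm_unit.
  have [c Ec] := Pu _ (PM _ _ PY (inv_closed sP P1 PM PX Xu)) uu uu'.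
  have EY : Y = c *: X by rewrite -mul_scalar_mx -Ec -mulmxA mulVmx // mulmx1.
  have E2 : (1 - c) *: h = (c * ii + ii)%:M.
    move: EY; rewrite /Y /X scalerDr -!mul_scalar_mx -scalar_mxM => /eqP.
    rewrite subr_eq -addrA -raddfD /= addrC -subr_eq => /eqP <-.
    by rewrite !mul_scalar_mx scalerBl scale1r.
  have [c1|c1] := eqVneq c 1.
    move: E2; rewrite c1 subrr scale0r mul1r => /esym /(scalar_mx_eq0 hn) /eqP.
    rewrite -mulr2n -mulr_natr mulf_eq0 (negPf ii_neq0) /=.
    by rewrite (negPf two_neq0).
  exists ((1 - c)^-1 * (c * ii + ii)); rewrite scalar_mxM -E2 mul_scalar_mx.
  by rewrite scalerA mulVf ?scale1r // subr_eq0 eq_sym.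
move=> m Pm.
set h1 := 2%:R^-1 *: (m + adjmx m).
set h2 := (2%:R * ii)^-1 *: (m - adjmx m).
have [c1 E1] : exists c, h1 = c%:M.
  apply: herm; first by apply: spcZ => //; apply: spcD => //; apply: PA.
  by rewrite /h1 adjmxZ adjmxD adjmxK rmorphV ?unitfE ?two_neq0 // rmorph_nat addrC.
have [c2 E2] : exists c, h2 = c%:M.
  apply: herm; first by apply: spcZ => //; apply: spcB => //; apply: PA.
  rewrite /h2 adjmxZ adjmxD adjmxN adjmxK rmorphV; last by rewrite unitfE mulf_neq0 ?two_neq0 ?ii_neq0.
  rewrite rmorphM rmorph_nat -[_ (ii)]/(conjc ii) conji mulrN invrN scaleNr -scalerN opprB.
  done.
exists (c1 + ii * c2); rewrite raddfD /= scalar_mxM -E1 -E2 mul_scalar_mx /h1 /h2.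
rewrite scalerA invfM mulrA mulrAC mulfV ?ii_neq0 // mul1r -scalerDr.
by rewrite addrACA subrr addr0 -mulr2n -(scaler_nat 2 m) scalerA mulVf ?two_neq0 // scale1r.
Qed.

End Mx.

Section Key.
Local Unset Implicit Arguments.
Variables (R : realType) (A : smallcat) (D : qpos_diagram R A).
Local Notation C := (R[i]).
Variables (X : qset) (J : forall a : obj A, qrel R X (dobj D a)).
Hypothesis Jlim : is_qset_limit J.

Lemma Jfun a : is_qfun (J a).
Proof. by case: Jlim => -[]. Qed.

Lemma qid_fun : is_qfun (@qid R X).
Proof.
split; first exact: qid_qrel.
by rewrite qdag_id qcomp_id_l; [split | apply: qid_qrel].
Qed.

Lemma Juniq (K1 : qrel R X X) : is_qfun K1 -> (forall a, qcomp (J a) K1 = J a) ->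
  K1 = @qid R X.
Proof.
move=> hK1 HK1.
case: (Jlim.2 X J Jlim.1) => K0 [_ _ Hu].
rewrite (Hu K1 hK1 HK1) (Hu (@qid R X)) //; first exact: qid_fun.
by move=> a; rewrite qcomp_id_r //; apply: fun_qrel; apply: Jfun.
Qed.

Definition E (x x' : atom X) (M : 'M[C]_(dim x', dim x)) :=
  forall a, @qcomp R X (dobj D a) X (qdag (J a)) (J a) x x' M.

Lemma E_spc x x' : spc (E x x').
Proof.
split; first by move=> a; case: (qcomp_spc (qdag (J a)) (J a) x x').
by move=> c u v Hu Hv a; apply: (qcomp_spc _ _ _ _).2.
Qed.

Lemma JJJ a : qle (qcomp (qdag (J a)) (qcomp (J a) (qcomp (qdag (J a)) (J a))))
  (qcomp (qdag (J a)) (J a)).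
Proof. by apply: qcomp_monor; apply: L3; [apply: Jfun | apply: fun_qrel; apply: Jfun]. Qed.

Lemma E_mul x y z (e : 'M[C]_(dim z, dim y)) (f : 'M[C]_(dim y, dim x)) :
  E y z e -> E x y f -> E x z (e *m f).
Proof.
move=> He Hf a; apply: JJJ; rewrite qcompA; exact: qcomp_gen (Hf a) (He a).
Qed.

Lemma E_adj x x' (e : 'M[C]_(dim x', dim x)) : E x x' e -> E x' x (adjmx e).
Proof.
move=> He a; have : qdag (qcomp (qdag (J a)) (J a)) (x:=x') (y:=x) (adjmx e) by exists e; split => //; apply: He.
by rewrite qdag_comp qdagK.
Qed.

Lemma E_1 x : E x x 1%:M.
Proof. by move=> a; apply: (fun_lid (Jfun a)); apply: qid1. Qed.

Lemma E_J a x x' b (t : 'M[C]_(dim b, dim x')) (e : 'M[C]_(dim x', dim x)) :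
  J a x' b t -> E x x' e -> J a x b (t *m e).
Proof.
move=> Ht He; apply: (L3 (Jfun a) (fun_qrel (Jfun a))).
exact: qcomp_gen (He a) Ht.
Qed.

Section Perm.
Variables (s : atom X -> atom X) (U : forall w, 'M[C]_(dim (s w), dim w))
  (ua ub : atom X -> C).
Hypotheses (hU1 : forall w, U w *m adjmx (U w) = (ua w)%:M)
  (hU2 : forall w, adjmx (U w) *m U w = (ub w)%:M) (hub : forall w, ub w != 0)
  (hJ1 : forall k w bb t, J k (s w) bb t -> J k w bb (t *m U w))
  (hJ2 : forall k w bb t, J k w bb t -> J k (s w) bb (t *m adjmx (U w))).

Definition Ks : qrel R X X := fun z y M =>
  M = 0 \/ exists (e : s z = y) (c : C), M = c *: castmx (congr1 (@Defs.dim X) e, erefl) (U z).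

Lemma Ks_qrel : is_qrel Ks.
Proof.
move=> z y; split; first by left.
move=> a u v; case=> [->|[e [c ->]]]; case=> [->|[e' [c' ->]]]; clear u v.
- by left; rewrite scaler0 addr0.
- by right; exists e', c'; rewrite scaler0 add0r.
- by right; exists e, (a * c); rewrite addr0 scalerA.
- right; exists e, (a * c + c'); rewrite (proof_irrelevance _ e' e); clear e'.
  by rewrite scalerA scalerDl.
Qed.

Lemma Ks_gen z : Ks z (s z) (U z).
Proof. by right; exists erefl, 1; rewrite scale1r castmx_id. Qed.

Lemma Ks_fun : is_qfun Ks.
Proof.
split; first exact: Ks_qrel.
split.
  move=> y y'; apply: qcomp_ind; first exact: qid_spc.
  move=> z _ k [r [Hr ->]] Hk.
  case: Hk => [->|[e1 [c1 ->]]]; first by rewrite mul0mx; left.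
  case: Hr => [->|[e2 [c2 ->]]]; first by rewrite adjmx0 mulmx0; left.
  clear k r; case: y' / e1; case: y / e2; rewrite !castmx_id.
  rewrite adjmxZ -scalemxAl -scalemxAr hU1 !scale_scalar_mx; exact: qidc.
move=> z z' M; case=> [->|[e [c ->]]]; first by case: (qcomp_spc (qdag Ks) Ks z z').
clear M; case: z' / e; rewrite castmx_id.
have -> : c%:M = (c / ub z) *: adjmx (U z) *m U z.
  by rewrite -scalemxAl hU2 scale_scalar_mx mulfVK.
apply: qcomp_gen; first exact: Ks_gen.
exists ((conjc (c / ub z)) *: U z); split.
  by right; exists erefl, (conjc (c / ub z)); rewrite castmx_id.
by rewrite adjmxZ conjcK.
Qed.

Lemma Ks_J a : qcomp (J a) Ks = J a.
Proof.
apply: qrel_ext => z bb.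
  apply: qcomp_ind; first exact: (fun_qrel (Jfun a)).
  move=> y r t Hr Ht; case: Hr => [->|[e [c ->]]].
    by rewrite mulmx0; case: (fun_qrel (Jfun a) z bb).
  clear r; case: y / e t Ht => t Ht; rewrite castmx_id -scalemxAr.
  by apply: spcZ; [exact: (fun_qrel (Jfun a)) | exact: hJ1].
move=> t Ht.
have -> : t = (ub z)^-1 *: (t *m adjmx (U z)) *m U z.
  by rewrite -scalemxAl -mulmxA hU2 mul_mx_scalar scalerA mulVf // scale1r.
apply: qcomp_gen; first exact: Ks_gen.
by apply: spcZ; [exact: (fun_qrel (Jfun a)) | exact: hJ2].
Qed.

Lemma Ks_qid w : @qid R X w (s w) (U w).
Proof.
rewrite -(Juniq Ks Ks_fun Ks_J); exact: Ks_gen.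
Qed.

End Perm.


Section Swap.
Variables (x x' : atom X) (T : 'M[C]_(dim x', dim x)) (ta tb : C).
Hypotheses (HT : E x x' T) (hT1 : T *m adjmx T = ta%:M) (hT2 : adjmx T *m T = tb%:M)
  (htb : tb != 0).

Definition sw (w : atom X) : atom X :=
  match excluded_middle_informative (w = x) with left _ => x' | right _ => w end.

Definition Uw (w : atom X) : 'M[C]_(dim (sw w), dim w) :=
  match excluded_middle_informative (w = x) as d
    return 'M[C]_(dim (match d with left _ => x' | right _ => w end), dim w) with
  | left ew => castmx (erefl, congr1 (@Defs.dim X) (esym ew)) T
  | right _ => 1%:M end.

Definition uaw (w : atom X) : C :=
  match excluded_middle_informative (w = x) with left _ => ta | right _ => 1 end.
Definition ubw (w : atom X) : C :=
  match excluded_middle_informative (w = x) with left _ => tb | right _ => 1 end.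

Lemma swap_qid : @qid R X x x' T.
Proof.
suff Hall : forall w, @qid R X w (sw w) (Uw w).
  have := Hall x; rewrite /Uw /sw; case: (excluded_middle_informative (x = x)) => // ex.
  by rewrite (proof_irrelevance _ ex erefl) castmx_id.
apply: (Ks_qid sw Uw uaw ubw).
- move=> w; rewrite /Uw /uaw /sw; case: (excluded_middle_informative (w = x)) => [ew|nw].
    by subst w; rewrite castmx_id.
  by rewrite adjmx1 mulmx1.
- move=> w; rewrite /Uw /ubw /sw; case: (excluded_middle_informative (w = x)) => [ew|nw].
    by subst w; rewrite castmx_id.
  by rewrite adjmx1 mulmx1.
- by move=> w; rewrite /ubw; case: (excluded_middle_informative (w = x)) => // _; rewrite oner_eq0.
- move=> k w bb; rewrite /Uw /sw; case: (excluded_middle_informative (w = x)) => [ew|nw] t.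
    by subst w; rewrite castmx_id => Ht; apply: E_J Ht HT.
  by rewrite mulmx1.
- move=> k w bb; rewrite /Uw /sw; case: (excluded_middle_informative (w = x)) => [ew|nw] t.
    by subst w; rewrite castmx_id => Ht; apply: E_J Ht (E_adj _ _ _ HT).
  by rewrite adjmx1 mulmx1.
Qed.

End Swap.

Lemma E_diag z (m : 'M[C]_(dim z)) : E z z m -> exists c, m = c%:M.
Proof.
move=> Hm; apply: (scalar_of (dim_gt0 z) (E_spc z z) (E_1 z)) => //.
- by move=> u v Hu Hv; apply: E_mul.
- by move=> u Hu; apply: E_adj.
move=> u Hu uu uu'.
have := swap_qid z z u 1 1 Hu uu uu' (oner_neq0 _).
case=> [u0|[e [c ->]]].
  by move: uu; rewrite u0 mul0mx => /esym /eqP; rewrite (negPf (@scalar1_neq0 R _ (dim_gt0 z))).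
by exists c; rewrite (proof_irrelevance _ e erefl) castmx_id.
Qed.

Lemma key x x' (M : 'M[C]_(dim x', dim x)) : E x x' M -> @qid R X x x' M.
Proof.
move=> HM; have [->|M0] := eqVneq M 0; first by left.
have [c Hc] := E_diag x _ (E_mul _ _ _ _ _ (E_adj _ _ _ HM) HM).
have [c' Hc'] := E_diag x' _ (E_mul _ _ _ _ _ HM (E_adj _ _ _ HM)).
apply: (swap_qid x x' M c' c HM Hc' Hc).
apply/eqP => c0; move: Hc; rewrite c0 raddf0 -{2}[M]adjmxK => /mx_adj_eq0.
move/(congr1 (@adjmx R _ _)); rewrite adjmxK adjmx0 => M0'.
by rewrite M0' eqxx in M0.
Qed.

End Key.

Theorem mainTheorem4 (R : realType) (A : smallcat) (D : qpos_diagram R A)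
    (X : qset) (J : forall a : obj A, qrel R X (dobj D a)) :
  is_qset_limit J ->
  is_qposet (qbigmeet (fun a : obj A => qcomp (qdag (J a)) (qcomp (drel D a) (J a)))) /\
  is_qpos_limit (qbigmeet (fun a : obj A => qcomp (qdag (J a)) (qcomp (drel D a) (J a)))) J.
Proof.
move=> Jlim.
have kk := key R A D X J Jlim.
have jf := Jfun R A D X J Jlim.
split; first exact: (Rl_poset R A D X J kk jf).
exact: (Rl_limit R A D X J kk jf Jlim).
Qed.
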